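(* Consider a Why Query with the \texttt{SUM} aggregate, an attribute $X$ with filters $p_1,\dots,p_m$, a threshold $\varepsilon$, a conciseness parameter $\sigma>0$, and a canonical predicate $P^C$. Then there exists an optimal explanation $P^*$ (a maximizer of $\rho_P-\sigma|P|$ over all $P\subseteq\{p_1,\dots,p_m\}$) with $P^*\subseteq P^C$.
   Context: $D$ is a finite table of rows; $M$ is a numerical column; $s_1,s_2$ are disjoint sets of rows (sibling subspaces). $X$ is a categorical column with values $x_1,\dots,x_m$; filter $p_i$ is the condition $X=x_i$. A predicate is $P\subseteq\{p_1,\dots,p_m\}$, $D_P$ the set of rows whose $X$-value is in $P$, $|P|$ its number of filters; $D'-D''$ is set difference. For $D'\subseteq D$, $\Delta(D')=\sum_{t\in D'\cap s_1}t[M]-\sum_{t\in D'\cap s_2}t[M]$; $\Delta_i=\Delta(D_{p_i})$; it is assumed $\Delta(D)>0$. $P$ is an actual cause if there is $\Gamma\subseteq\{p_1,\dots,p_m\}$, $\Gamma\cap P=\emptyset$ (valid contingency), with $\Delta(D-D_\Gamma-D_P)\le\varepsilon<\Delta(D-D_\Gamma)$. For an actual cause, $\rho_P=\frac{1}{1+\min_\Gamma|\Gamma|_W}$ over valid contingencies, with $|\Gamma|_W=\max\left(\frac{\Delta(D-D_P)-\Delta(D-D_P-D_\Gamma)}{\Delta(D)},0\right)$; otherwise $\rho_P=0$. Canonical predicate: order the filters so that $\Delta_1\ge\cdots\ge\Delta_m$ and let $j$ be such that $\Delta(D)-\sum_{i=1}^{j}\Delta_i\le\varepsilon<\Delta(D)-\sum_{i=1}^{j-1}\Delta_i$;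 then $P^C=\{p_1,\dots,p_j\}$. *)

(* Defs.v *)
From HB Require Import structures.
From mathcomp Require Import all_boot all_order all_algebra.
From mathcomp Require Import fingroup perm.
Set Implicit Arguments. Unset Strict Implicit. Unset Printing Implicit Defensive.
Import Order.TTheory GRing.Theory Num.Theory.
Local Open Scope ring_scope.

Section WhyQuery.
(* R : numbers; T : the (finite) set of rows of the table D;
   M : the numerical column; s1 s2 : sibling subspaces;
   m : number of values of the categorical column X, whose values are
   indexed by 'I_m (filter p_i is X = x_i, identified with i). *)
Variables (R : realFieldType) (T : finType) (m : nat).
Variables (M : T -> R) (s1 s2 : {set T}) (X : T -> 'I_m).

Definition DP (P : {set 'I_m}) : {set T} := [set t | X t \in P].

Definition Delta (D' : {set T}) : R :=
  \sum_(t in D' :&: s1) M t - \sum_(t in D' :&: s2) M t.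

Definition Delta_i (i : 'I_m) : R := Delta (DP [set i]).

Definition DD : {set T} := [set: T].

Definition valid_contingency (eps : R) (P G : {set 'I_m}) : bool :=
  [&& [disjoint G & P],
      Delta (DD :\: DP G :\: DP P) <= eps &
      eps < Delta (DD :\: DP G)].

Definition actual_cause (eps : R) (P : {set 'I_m}) : bool :=
  [exists G, valid_contingency eps P G].

Definition weight (P G : {set 'I_m}) : R :=
  Order.max ((Delta (DD :\: DP P) - Delta (DD :\: DP P :\: DP G)) / Delta DD) 0.

Definition rho (eps : R) (P : {set 'I_m}) : R :=
  match [pick G | valid_contingency eps P G] with
  | Some G0 =>
      1 / (1 + \big[Order.min/weight P G0]_(G | valid_contingency eps P G)
                 weight P G)
  | None => 0
  end.

Definition canonical_predicate (eps : R) (PC : {set 'I_m}) : Prop :=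
  exists (ord : {perm 'I_m}) (j : nat),
    [/\ forall a b : 'I_m, (a <= b)%N -> Delta_i (ord b) <= Delta_i (ord a),
        (0 < j <= m)%N,
        Delta DD - \sum_(i < m | (i < j)%N) Delta_i (ord i) <= eps,
        eps < Delta DD - \sum_(i < m | (i < j.-1)%N) Delta_i (ord i) &
        PC = [set ord i | i : 'I_m & (i < j)%N]].

Definition objective (eps sigma : R) (P : {set 'I_m}) : R :=
  rho eps P - sigma * #|P|%:R.

End WhyQuery.

(* Main.v *)
Require Import Defs.
From HB Require Import structures.
From mathcomp Require Import all_boot all_order all_algebra.
From mathcomp Require Import fingroup perm ring lra.
Import Order.TTheory GRing.Theory Num.Theory.
Local Open Scope ring_scope.

Section Aux.
Variables (R : realFieldType) (T : finType) (m : nat).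
Variables (M : T -> R) (s1 s2 : {set T}) (X : T -> 'I_m).

Definition ff t := (if t \in s1 then M t else 0) - (if t \in s2 then M t else 0).

Lemma DeltaE A : Delta M s1 s2 A = \sum_(t in A) ff t.
Proof.
rewrite /Delta /ff sumrB; congr (_ - _).
  rewrite -big_mkcondr; apply: eq_bigl => t; by rewrite inE.
rewrite -big_mkcondr; apply: eq_bigl => t; by rewrite inE.
Qed.

Definition g (S : {set 'I_m}) := \sum_(i in S) Delta_i M s1 s2 X i.

Lemma DeltaDP S : Delta M s1 s2 (DP X S) = g S.
Proof.
rewrite DeltaE /g (partition_big X (mem S)); last by move=> t; rewrite inE.
apply: eq_bigr => i Hi; rewrite /Delta_i DeltaE; apply: eq_bigl => t.
rewrite !inE; case: (X t =P i) => [->|_]; rewrite ?eqxx ?andbT ?andbF //; exact: Hi.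
Qed.

Lemma DeltaD S : Delta M s1 s2 (DD T :\: DP X S) = Delta M s1 s2 (DD T) - g S.
Proof.
rewrite -DeltaDP !DeltaE.
have := @big_setID _ _ _ _ (DD T) (DP X S) ff.
rewrite {2}/DD setTI => -> /=; by rewrite addrC addrK.
Qed.

Lemma gU (A B : {set 'I_m}) : [disjoint A & B] -> g (A :|: B) = g A + g B.
Proof.
move=> dAB; rewrite /g -bigU //; apply: eq_bigl => i; by rewrite !inE.
Qed.

Lemma validE eps (P G : {set 'I_m}) : valid_contingency M s1 s2 X eps P G =
  [&& [disjoint G & P], Delta M s1 s2 (DD T) - g (G :|: P) <= eps &
      eps < Delta M s1 s2 (DD T) - g G].
Proof.
rewrite /valid_contingency -!DeltaD setDDl.
have -> : DP X G :|: DP X P = DP X (G :|: P) by apply/setP => t; rewrite !inE.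
done.
Qed.

Lemma weightE (P G : {set 'I_m}) : [disjoint G & P] -> 0 < Delta M s1 s2 (DD T) ->
  weight M s1 s2 X P G = Order.max (g G / Delta M s1 s2 (DD T)) 0.
Proof.
move=> dGP _; rewrite /weight setDDl.
have -> : DP X P :|: DP X G = DP X (P :|: G) by apply/setP => t; rewrite !inE.
rewrite !DeltaD gU; last by rewrite disjoint_sym.
congr (Order.max (_ / _) _); ring.
Qed.

Variable eps : R.
Local Notation valid := (valid_contingency M s1 s2 X eps).
Local Notation weight := (weight M s1 s2 X).
Local Notation rho := (rho M s1 s2 X eps).

Lemma weight_ge0 P G : 0 <= weight P G.
Proof. by rewrite /Defs.weight le_max lexx orbT. Qed.

Lemma bigmin_ge0 P x : 0 <= x ->
  0 <= \big[Order.min/x]_(G | valid P G) weight P G.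
Proof. move=> x0; apply: le_bigmin => // G _; exact: weight_ge0. Qed.

Lemma rho_None P : (forall G, ~~ valid P G) -> rho P = 0.
Proof. move=> H; rewrite /Defs.rho; case: pickP => [G0 HG|//]. by rewrite (negbTE (H G0)) in HG. Qed.

Lemma rho_Some P G : valid P G -> exists G0, valid P G0 /\
  rho P = 1 / (1 + \big[Order.min/weight P G0]_(G | valid P G) weight P G).
Proof.
move=> HG; rewrite /Defs.rho; case: pickP => [G0 HG0|H]; first by exists G0.
by rewrite H in HG.
Qed.

Lemma inv_ge0 (x : R) : 0 <= x -> 0 <= 1 / (1 + x) /\ 1 / (1 + x) <= 1.
Proof.
move=> x0; have p : 0 < 1 + x by lra.
split; first by rewrite divr_ge0 // ltW.
by rewrite ler_pdivrMr // mul1r; lra.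
Qed.

Lemma rho_bounds P : 0 <= rho P <= 1.
Proof.
case: (pickP (valid P)) => [G HG|H].
  have [G0 [HG0 ->]] := rho_Some _ _ HG.
  have [a b] := inv_ge0 _ (bigmin_ge0 P _ (weight_ge0 P G0)); by rewrite a b.
by rewrite rho_None ?lexx ?ler01 // => G; rewrite H.
Qed.

Lemma rho_mono P P' :
  (forall G, valid P G -> exists2 G', valid P' G' & weight P' G' <= weight P G) ->
  rho P <= rho P'.
Proof.
move=> Hm.
case: (pickP (valid P)) => [G HG|H]; last first.
  by rewrite rho_None ?(andP (rho_bounds P')).1 // => G; rewrite H.
have [G0 [HG0 ->]] := rho_Some _ _ HG.
have [G' HG' _] := Hm _ HG0.
have [G1 [HG1 ->]] := rho_Some _ _ HG'.
set x := \big[_/_]_(G | _) _.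
set y := \big[_/_]_(G | _) _.
have yx : y <= x.
  apply: le_bigmin.
    have [G2 HG2 le2] := Hm _ HG0.
    apply: le_trans le2; exact: bigmin_le_cond.
  move=> G2 HG2; have [G3 HG3 le3] := Hm _ HG2.
  apply: le_trans le3; exact: bigmin_le_cond.
have x0 : 0 <= x by apply: bigmin_ge0; exact: weight_ge0.
have y0 : 0 <= y by apply: bigmin_ge0; exact: weight_ge0.
rewrite !div1r lef_pV2 ?posrE; lra.
Qed.


Local Notation D := (Delta M s1 s2 (DD T)).
Local Notation Di := (Delta_i M s1 s2 X).

Lemma swap_rho (P : {set 'I_m}) a b : a \notin P -> b \in P -> Di b <= Di a ->
  0 < D -> rho P <= rho (a |: (P :\ b)).
Proof.
move=> aP bP dab D0; apply: rho_mono => G; rewrite validE => /and3P [dGP H1 H2].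
have ab : a != b by apply: contraNneq aP => ->.
have ba : b != a by rewrite eq_sym.
have bG : b \notin G by rewrite (disjointFl dGP bP).
have gen : forall x, (x \in G) && (x \in P) = false.
  by move=> x; case: (boolP (x \in G)) => // xG; rewrite (disjointFr dGP xG).
case: (boolP (a \in G)) => aG.
- exists (b |: (G :\ a)).
    have d' : [disjoint b |: (G :\ a) & a |: (P :\ b)].
      rewrite -setI_eq0; apply/eqP/setP => x; rewrite !inE.
      case: (x =P a) => [->|/eqP na]; first by rewrite ?(negbTE ab) ?eqxx.
      case: (x =P b) => [->|/eqP nb]; first by rewrite ?(negbTE ba) ?eqxx.
      by rewrite ?(negbTE na) ?(negbTE nb) /= gen.
    have U : (b |: (G :\ a)) :|: (a |: (P :\ b)) = G :|: P.
      apply/setP => x; rewrite !inE.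
      case: (x =P a) => [->|/eqP na]; first by rewrite ?aG ?eqxx ?orbT.
      case: (x =P b) => [->|/eqP nb]; first by rewrite ?bP ?eqxx ?orbT.
      by rewrite ?(negbTE na) ?(negbTE nb).
    have g1 : g (b |: (G :\ a)) = Di b + g (G :\ a).
      by rewrite /g big_setU1 // !inE (negbTE bG) andbF.
    have g2 : g G = Di a + g (G :\ a) by rewrite /g (big_setD1 _ aG).
    rewrite validE d' U H1 /=; lra.
  rewrite !weightE //; last first.
    rewrite -setI_eq0; apply/eqP/setP => x; rewrite !inE.
    case: (x =P a) => [->|/eqP na]; first by rewrite ?(negbTE ab) ?eqxx.
    case: (x =P b) => [->|/eqP nb]; first by rewrite ?(negbTE ba) ?eqxx.
    by rewrite ?(negbTE na) ?(negbTE nb) /= gen.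
  apply: le_max2 => //; rewrite ler_pM2r ?invr_gt0 //.
  have g1 : g (b |: (G :\ a)) = Di b + g (G :\ a).
    by rewrite /g big_setU1 // !inE (negbTE bG) andbF.
  have g2 : g G = Di a + g (G :\ a) by rewrite /g (big_setD1 _ aG).
  lra.
- have d' : [disjoint G & a |: (P :\ b)].
    rewrite -setI_eq0; apply/eqP/setP => x; rewrite !inE.
    case: (x =P a) => [->|/eqP na]; first by rewrite ?(negbTE aG).
    by rewrite ?(negbTE na) /= andbCA gen andbF.
  exists G; last by rewrite !weightE.
  have U : G :|: (a |: (P :\ b)) = a |: ((G :|: P) :\ b).
    apply/setP => x; rewrite !inE.
    case: (x =P a) => [->|/eqP na]; first by rewrite ?eqxx ?orbT.
    case: (x =P b) => [->|/eqP nb]; first by rewrite ?(negbTE bG) ?(negbTE ba) ?eqxx.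
    by rewrite ?(negbTE na) ?(negbTE nb).
  have g1 : g (a |: ((G :|: P) :\ b)) = Di a + g ((G :|: P) :\ b).
    by rewrite /g big_setU1 // !inE (negbTE aG) (negbTE aP) andbF.
  have g2 : g (G :|: P) = Di b + g ((G :|: P) :\ b).
    by rewrite /g (big_setD1 b) // !inE bP orbT.
  rewrite validE d' U H2 andbT /=; lra.
Qed.


Lemma claim (PC : {set 'I_m}) (sigma : R) :
  0 < D -> 0 <= sigma ->
  (forall a b, a \in PC -> b \notin PC -> Di b <= Di a) ->
  D - g PC <= eps -> eps < D ->
  forall n (P : {set 'I_m}), #|P :\: PC| = n -> exists2 P' : {set 'I_m}, P' \subset PC &
    objective M s1 s2 X eps sigma P <= objective M s1 s2 X eps sigma P'.
Proof.
move=> D0 s0 Hab HPC HeD; elim=> [|n IH] P HP.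
  by exists P => //; rewrite -setD_eq0 -cards_eq0 HP.
have [b bPC] : exists b, b \in P :\: PC by apply/card_gt0P; rewrite HP.
have /setDP [bP bNPC] := bPC.
case: (boolP (PC \subset P)) => sPC.
  exists PC => //; rewrite /objective.
  have g0 : g set0 = 0 by rewrite /g big_set0.
  have d0 : [disjoint set0 & PC] by rewrite -setI_eq0 set0I.
  have r : rho P <= rho PC.
    apply: rho_mono => G HG; exists set0.
      by rewrite validE d0 set0U g0 subr0 HPC HeD.
    by rewrite weightE // g0 mul0r maxxx weight_ge0.
  have c : (#|PC| <= #|P|)%N := subset_leq_card sPC.
  have c' : (#|PC|%:R <= #|P|%:R :> R) by rewrite ler_nat.
  have := ler_wpM2l s0 c'; lra.
have [a aPC aP] : exists2 a, a \in PC & a \notin P by apply/subsetPn.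
have HP1 : #|(a |: (P :\ b)) :\: PC| = n.
  have -> : (a |: (P :\ b)) :\: PC = (P :\: PC) :\ b.
    apply/setP => x; rewrite !inE.
    case: (x =P a) => [->|_]; first by rewrite aPC /= !andbF.
    by rewrite /= andbCA.
  by move: (cardsD1 b (P :\: PC)); rewrite HP bPC add1n => -[].
have [P' sP' HP'] := IH _ HP1.
exists P' => //; apply: le_trans HP'; rewrite /objective.
have r := swap_rho P a b aP bP (Hab _ _ aPC bNPC) D0.
rewrite cardsU1 (cardsD1 b P) !inE (negbTE aP) andbF bP /=; lra.
Qed.

Lemma canon (PC : {set 'I_m}) : canonical_predicate M s1 s2 X eps PC -> 0 < D ->
  [/\ (forall a b, a \in PC -> b \notin PC -> Di b <= Di a), D - g PC <= eps & eps < D].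
Proof.
case=> ord [j [Hs /andP[j0 jm] H1 H2 ->]] D0.
have sumE k : \sum_(i < m | (i < k)%N) Di (ord i) = g [set ord i | i : 'I_m & (i < k)%N].
  rewrite /g big_imset /=; last by move=> x y _ _; apply: perm_inj.
  by apply: eq_bigl => i; rewrite inE.
split.
- move=> a b /imsetP [i Hi ->] bN.
  rewrite inE in Hi.
  have i'j : ~~ (ord^-1%g b < j)%N.
    apply: contra bN => h; apply/imsetP; exists (ord^-1%g b); by rewrite ?inE ?permKV.
  rewrite -{1}(permKV ord b); apply: Hs.
  rewrite -ltnNge in i'j; exact: ltnW (leq_trans Hi i'j).
- by rewrite -sumE.
have hk : (j.-1 < m)%N by rewrite (ltn_predK j0).
pose k := Ordinal hk.
have sp : \sum_(i < m | (i < j)%N) Di (ord i) =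
          Di (ord k) + \sum_(i < m | (i < j.-1)%N) Di (ord i).
  rewrite (bigD1 k) /=; last by rewrite ltn_predL.
  congr (_ + _); apply: eq_bigl => i.
  rewrite -val_eqE /=; case: i => i hi /=.
  case: j j0 jm {H1 H2 sumE hk k} => // j' _ _ /=.
  by rewrite ltnS ltn_neqAle andbC.
have pk : 0 < Di (ord k) by lra.
have s0 : 0 <= \sum_(i < m | (i < j.-1)%N) Di (ord i).
  apply: sumr_ge0 => i hi; apply: le_trans (ltW pk) (Hs _ _ _).
  exact: ltnW.
lra.
Qed.

End Aux.

Theorem proposition3p16 (R : realFieldType) (T : finType) (m : nat)
    (M : T -> R) (s1 s2 : {set T}) (X : T -> 'I_m)
    (eps sigma : R) (PC : {set 'I_m}) :
  [disjoint s1 & s2] ->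
  0 < Delta M s1 s2 (DD T) ->
  0 < sigma ->
  canonical_predicate M s1 s2 X eps PC ->
  exists Pstar : {set 'I_m},
    (forall P : {set 'I_m},
        objective M s1 s2 X eps sigma P <= objective M s1 s2 X eps sigma Pstar)
    /\ Pstar \subset PC.
Proof.
move=> _ D0 s0 Hc.
have [Hab HPC HeD] := @canon R T m M s1 s2 X eps PC Hc D0.
case: (@arg_maxP _ _ _ (set0 : {set 'I_m}) xpredT (objective M s1 s2 X eps sigma) isT) => P0 _ HP0.
have [P' sP' HP'] := @claim R T m M s1 s2 X eps PC sigma D0 (ltW s0) Hab HPC HeD _ P0 erefl.
exists P'; split => // P; exact: le_trans (HP0 P isT) HP'.
Qed.
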